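(* Let $A\in\mathbb{R}^{n\times n}$, $B\in\mathbb{R}^{n\times m}$ be (unknown) matrices of the system $\Sigma:\ \dot x=Ax+Bu,\ y=x$, with $x\in X\subset\mathbb{R}^n$, $u\in U\subset\mathbb{R}^m$. Let $T\in\mathbb{N}^+$ and data matrices $\mathcal U_{0,T}\in\mathbb{R}^{m\times T}$, $\mathcal X_{0,T},\mathcal X_{1,T},\bar{\mathcal X}_{0,T},\bar{\mathcal X}_{1,T}\in\mathbb{R}^{n\times T}$ satisfy $\mathcal X_{1,T}=A\mathcal X_{0,T}+B\mathcal U_{0,T}$ and $\bar{\mathcal X}_{1,T}=A\bar{\mathcal X}_{0,T}$, with $\mathcal X_{0,T},\bar{\mathcal X}_{0,T}$ of full row rank; let $\bar Q\in\mathbb{R}^{T\times n}$ satisfy $\bar{\mathcal X}_{0,T}\bar Q=\mathds{I}_n$. Suppose there exist $\hat\kappa>0$ and matrices $\mathcal H\in\mathbb{R}^{T\times n}$, $\hat A\in\mathbb{R}^{\hat n\times\hat n}$, $\Xi\in\mathbb{R}^{m\times\hat n}$, $\Theta\in\mathbb{R}^{n\times\hat n}$ such that (i) $\mathcal X_{0,T}\mathcal H=P^{-1}$ for some symmetric $P\succ0$; (ii) with $Q:=\mathcal H P$ (so $\mathcal X_{0,T}Q=\mathds{I}_n$), the matrix $\mathcal U_{0,T}Q$ has full row rank and, writing $B_{\mathrm{d}}:=(\mathcal X_{1,T}Q-\bar{\mathcal X}_{1,T}\bar Q)(\mathcal U_{0,T}Q)^\dagger$, one has $\bar{\mathcal X}_{1,T}\bar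 Q\,\Theta=\Theta\hat A-B_{\mathrm{d}}\Xi$; (iii) $\mathcal H^\top\mathcal X_{1,T}^\top+\mathcal X_{1,T}\mathcal H\preceq-\hat\kappa\,\mathcal X_{0,T}\mathcal H$. Let $\hat B\in\mathbb{R}^{\hat n\times\hat m}$ be arbitrary, $\Psi\in\mathbb{R}^{m\times\hat m}$ arbitrary, $\hat C=\Theta$, and consider the reduced-order model $\hat\Sigma:\ \dot{\hat x}=\hat A\hat x+\hat B\hat u,\ \hat y=\hat C\hat x$, with $\hat x\in\hat X\subset\mathbb{R}^{\hat n}$, $\hat u\in\hat U\subset\mathbb{R}^{\hat m}$, and the interface map $u=\mathcal U_{0,T}Q(x-\Theta\hat x)+\Xi\hat x+\Psi\hat u$. Then for any $\varepsilon$ with $0<\varepsilon<\hat\kappa$, the function $\mathcal V(x,\hat x)=(x-\Theta\hat x)^\top P(x-\Theta\hat x)$ is a simulation function from $\hat\Sigma$ to $\Sigma$ with $\alpha=\lambda_{\min}(P)$, $\kappa=\hat\kappa-\varepsilon$ and $\rho=\frac1\varepsilon\big\|\sqrt P\,(B_{\mathrm d}\Psi-\Theta\hat B)\big\|^2$; specifically, $\alpha\|x-\hat C\hat x\|^2\le\mathcal V(x,\hat x)$ for all $x\in X,\hat x\in\hat X$, and for all $x\in X,\hat x\in\hat X,\hat u\in\hat U$, with $u$ given by the interface map, $$\partial_x\mathcal V(x,\hat x)(Ax+Bu)+\partial_{\hat x}\mathcal V(x,\hat x)(\hat A\hat x+\hat B\hat u)\le-\kappa\mathcal V(x,\hat x)+\rho\|\hat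 u\|^2.$$
   Context: A simulation function (SF) from $\hat\Sigma$ to $\Sigma$ is $\mathcal V:X\times\hat X\to\mathbb{R}_0^+$ for which there are $\alpha,\kappa,\rho>0$ with $\alpha\|y-\hat y\|^2\le\mathcal V(x,\hat x)$ for all $x,\hat x$ (where $y=x$, $\hat y=\hat C\hat x$), and for all $x,\hat x,\hat u$ there is $u$ with $\mathsf L\mathcal V(x,\hat x)\le-\kappa\mathcal V(x,\hat x)+\rho\|\hat u\|^2$, where $\mathsf L\mathcal V$ is the Lie derivative along $(Ax+Bu,\hat A\hat x+\hat B\hat u)$. The data $\mathcal X_{0,T},\mathcal X_{1,T},\mathcal U_{0,T}$ are samples of state, state derivative and input along one trajectory; $\bar{\mathcal X}_{0,T},\bar{\mathcal X}_{1,T}$ along a second trajectory with zero input. $M^\dagger$ is the right pseudoinverse of a full-row-rank matrix $M$ ($MM^\dagger=\mathds I$); $\sqrt P$ is the symmetric positive definite square root; $\lambda_{\min}$ is the smallest eigenvalue; $\|\cdot\|$ is the Euclidean norm / induced matrix norm. *)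

(* Defs.v *)
From HB Require Import structures.
From mathcomp Require Import all_boot all_order all_algebra.
From mathcomp Require Import all_classical all_reals all_analysis.
Set Implicit Arguments. Unset Strict Implicit. Unset Printing Implicit Defensive.
Import Order.TTheory GRing.Theory Num.Theory.
Import numFieldNormedType.Exports.
Local Open Scope classical_set_scope.
Local Open Scope ring_scope.

Section Defs.
Variable R : realType.

Definition qform n (M : 'M[R]_n) (v : 'cV[R]_n) : R := (v^T *m M *m v) ord0 ord0.

Definition posdef n (M : 'M[R]_n) : Prop :=
  M^T = M /\ forall v : 'cV[R]_n, v != 0 -> 0 < qform M v.

Definition loewner_le n (M1 M2 : 'M[R]_n) : Prop :=
  forall v : 'cV[R]_n, 0 <= qform (M2 - M1) v.

Definition enorm n (v : 'cV[R]_n) : R := Num.sqrt (\sum_i (v i ord0) ^+ 2).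

Definition opnorm n m (M : 'M[R]_(n, m)) : R :=
  sup [set enorm (M *m v) | v in [set v : 'cV[R]_m | enorm v <= 1]].

Definition rpinv n m (M : 'M[R]_(n, m)) : 'M[R]_(m, n) := M^T *m invmx (M *m M^T).

Definition lambda_min n (M : 'M[R]_n) : R := inf [set a : R | eigenvalue M a].

Definition sqrtm n (M : 'M[R]_n) : 'M[R]_n :=
  xget 0 [set S : 'M[R]_n | posdef S /\ S *m S = M].

End Defs.

(* Main.v *)
Require Import Defs.
From HB Require Import structures.
From mathcomp Require Import all_boot all_order all_algebra.
From mathcomp Require Import all_classical all_reals all_analysis.
From mathcomp Require Import spectral sesquilinear complex.
From mathcomp Require Import ring lra.
Import Order.TTheory GRing.Theory Num.Theory.
Import numFieldNormedType.Exports.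
Local Open Scope classical_set_scope.
Local Open Scope ring_scope.
Set Implicit Arguments. Unset Strict Implicit. Unset Printing Implicit Defensive.
Section D.
Variable R : realType.
Definition bf n (P : 'M[R]_n) (x y : 'cV[R]_n) : R := (x^T *m P *m y) 0 0.

Lemma bfD n (P : 'M[R]_n) x y z : bf P x (y + z) = bf P x y + bf P x z.
Proof. by rewrite /bf mulmxDr mxE. Qed.
Lemma bfDl n (P : 'M[R]_n) x y z : bf P (x + y) z = bf P x z + bf P y z.
Proof. by rewrite /bf linearD /= !mulmxDl mxE. Qed.
Lemma bfZ n (P : 'M[R]_n) x (c : R) y : bf P x (c *: y) = c * bf P x y.
Proof. by rewrite /bf -scalemxAr mxE. Qed.
Lemma bfZl n (P : 'M[R]_n) x (c : R) y : bf P (c *: x) y = c * bf P x y.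
Proof. by rewrite /bf linearZ /= -!scalemxAl mxE. Qed.

Lemma qform_shift n (P : 'M[R]_n) e w (h : R) :
  qform P (e + h *: w) = qform P e + h * (bf P e w + bf P w e) + h ^+ 2 * qform P w.
Proof.
rewrite -[qform _ _]/(bf P _ _) bfD !bfDl !bfZ !bfZl.
rewrite /qform -/(bf P e e) -/(bf P w w).
rewrite expr2; ring.
Qed.

Lemma deriv_q n k (P : 'M[R]_n) (g : 'cV[R]_k -> 'cV[R]_n) (a v : 'cV[R]_k) (w : 'cV[R]_n) :
  (forall h : R, g (h *: v + a) = g a + h *: w) ->
  'D_v (fun z => qform P (g z)) a = bf P (g a) w + bf P w (g a).
Proof.
move=> gE; rewrite /derive; apply: cvg_lim; first exact: norm_hausdorff.
set b := bf P (g a) w + bf P w (g a).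
have H1 : (fun h : R => b + h * qform P w) @ (0:R)^' --> b.
  apply: cvg_within_filter.
  suff : (fun h : R => b + h * qform P w) @ (0:R) --> b + 0 * qform P w by rewrite mul0r addr0.
  apply: (@cvgD _ _ _ _ _ (fun=> b) (fun h => h * qform P w)); first exact: cvg_cst.
  by apply: cvgMr_tmp; exact: cvg_id.
apply: (cvg_trans _ H1).
apply: near_eq_cvg; near=> h.
have hn0 : h != 0 by near: h; exact: nbhs_dnbhs_neq.
rewrite /= gE qform_shift -/b.
have -> : qform P (g a) + h * b + h ^+ 2 * qform P w - qform P (g a) = h * (b + h * qform P w) by ring.
by rewrite -[h^-1 *: _]/(h^-1 * _) mulKf.
Unshelve. all: by end_near.
Qed.
Lemma posdef_ge0 n (P : 'M[R]_n) v : posdef P -> 0 <= qform P v.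
Proof.
move=> [_ pP]; have [->|nz] := eqVneq v 0; last exact/ltW/pP.
by rewrite /qform mulmx0 mxE.
Qed.

Lemma cTc n (w : 'cV[R]_n) : (w^T *m w) 0 0 = \sum_i w i ord0 ^+ 2.
Proof. by rewrite mxE; apply: eq_bigr => i _; rewrite mxE expr2. Qed.

Lemma sumsq_ge0 n (w : 'cV[R]_n) : 0 <= \sum_i w i ord0 ^+ 2.
Proof. by apply: sumr_ge0 => i _; exact: sqr_ge0. Qed.

Lemma enorm_sq n (w : 'cV[R]_n) : enorm w ^+ 2 = \sum_i w i ord0 ^+ 2.
Proof. by rewrite /enorm sqr_sqrtr // sumsq_ge0. Qed.

Lemma sumsq_eq0 n (w : 'cV[R]_n) : \sum_i w i ord0 ^+ 2 = 0 -> w = 0.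
Proof.
move/eqP; rewrite psumr_eq0 => [/allP H|i _]; last exact: sqr_ge0.
apply/matrixP => i j; rewrite ord1 mxE; apply/eqP; rewrite -sqrf_eq0.
have := H i; rewrite mem_index_enum => /(_ isT) /implyP; exact.
Qed.

Lemma enorm_ge0 n (w : 'cV[R]_n) : 0 <= enorm w.
Proof. exact: sqrtr_ge0. Qed.

Lemma enormZ n (c : R) (w : 'cV[R]_n) : enorm (c *: w) = `|c| * enorm w.
Proof.
rewrite /enorm; under eq_bigr do rewrite mxE exprMn.
by rewrite -mulr_sumr sqrtrM ?sqr_ge0 // sqrtr_sqr.
Qed.

Lemma term_le n (F : 'I_n -> R) i : (forall j, 0 <= F j) -> F i <= \sum_j F j.
Proof.
move=> F0; rewrite (bigD1 i) //= lerDl; apply: sumr_ge0 => j _; exact: F0.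
Qed.

Lemma coord_le n (w : 'cV[R]_n) j : `|w j ord0| <= enorm w.
Proof.
rewrite -sqrtr_sqr /enorm; apply: ler_wsqrtr.
exact: (@term_le _ (fun i => w i ord0 ^+ 2) j (fun i => sqr_ge0 _)).
Qed.

Lemma enorm_l1 n (w : 'cV[R]_n) : enorm w <= \sum_i `|w i ord0|.
Proof.
have s0 : 0 <= \sum_i `|w i ord0| by apply: sumr_ge0 => i _.
rewrite -[X in _ <= X]ger0_norm // -sqrtr_sqr /enorm; apply: ler_wsqrtr.
rewrite expr2 mulr_suml; apply: ler_sum => i _.
rewrite -real_normK ?num_real // expr2.
apply: ler_wpM2l => //; exact: (@term_le _ (fun i => `|w i ord0|) i (fun i => normr_ge0 _)).
Qed.

Lemma ub_N m k (N : 'M[R]_(m, k)) :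
  has_ubound [set enorm (N *m v) | v in [set v : 'cV[R]_k | enorm v <= 1]].
Proof.
exists (\sum_i \sum_j `|N i j|) => _ [v vle <-].
apply: (le_trans (enorm_l1 _)); apply: ler_sum => i _.
rewrite mxE; apply: (le_trans (ler_norm_sum _ _ _)); apply: ler_sum => j _.
rewrite normrM -[X in _ <= X]mulr1; apply: ler_wpM2l => //.
exact: le_trans (coord_le _ _) vle.
Qed.

Lemma opnorm_bound m k (N : 'M[R]_(m, k)) u : enorm (N *m u) <= opnorm N * enorm u.
Proof.
have [t0|tn0] := eqVneq (enorm u) 0.
  have u0 : u = 0 by apply: sumsq_eq0; rewrite -enorm_sq t0 expr2 mulr0.
  rewrite t0 mulr0 u0 mulmx0.
  by have := enormZ 0 (0 : 'cV[R]_m); rewrite scale0r normr0 mul0r => ->.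
have tp : 0 < enorm u by rewrite lt_def tn0 enorm_ge0.
have H : enorm (N *m ((enorm u)^-1 *: u)) <= opnorm N.
  apply: ub_le_sup; first exact: ub_N.
  exists ((enorm u)^-1 *: u) => //=.
  by rewrite enormZ ger0_norm ?invr_ge0 ?enorm_ge0 // mulVf.
move: H; rewrite -scalemxAr enormZ ger0_norm ?invr_ge0 ?enorm_ge0 //.
by rewrite mulrC ler_pdivrMr.
Qed.

Lemma bf_sym n (P : 'M[R]_n) x y : P^T = P -> bf P x y = bf P y x.
Proof.
move=> sP; rewrite /bf.
have -> : (x^T *m P *m y) 0 0 = ((x^T *m P *m y)^T) 0 0 by rewrite [RHS]mxE.
by rewrite !trmx_mul trmxK sP mulmxA.
Qed.

Lemma young n (P : 'M[R]_n) e y (eps : R) : posdef P -> 0 < eps ->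
  2 * bf P e y <= eps * qform P e + eps^-1 * qform P y.
Proof.
move=> pdP ep; have [sP _] := pdP.
have := posdef_ge0 (eps *: e + (-1) *: y) pdP.
rewrite qform_shift -[qform P (eps *: e)]/(bf P _ _) bfZ bfZl -/(qform P e).
rewrite bfZ bfZl (bf_sym _ y) //.
move=> h; change (bf P e e) with (qform P e) in h.
rewrite -(ler_pM2l ep) mulrDr mulVKf ?gt_eqF //.
lra.
Qed.
End D.

Section S.
Local Open Scope sesquilinear_scope.
Variable R : realType.
Local Notation C := (R[i]).
Local Notation toC := (real_complex R).
Lemma cj (x : R) : (toC x)^* = toC x.
Proof. exact: conjc_real. Qed.
Lemma ct_real n (P : 'M[R]_n) : P^T = P -> (map_mx toC P)^t* = map_mx toC P.
Proof.
by move=> sP; rewrite map_trmx -map_mx_comp sP; apply: eq_map_mx => x /=; exact: cj.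
Qed.

Lemma real_spec n (P : 'M[R]_n) : P^T = P -> exists (U : 'M[C]_n) (d : 'rV[R]_n),
  [/\ U *m U^t* = 1%:M, U^t* *m U = 1%:M &
   map_mx toC P = U^t* *m diag_mx (map_mx toC d) *m U].
Proof.
move=> sP.
have nP : (map_mx toC P) \is normalmx by apply/normalmxP; rewrite ct_real.
have hP : (map_mx toC P) \is hermsymmx.
  by apply/is_hermitianmxP; rewrite expr0 scale1r ct_real.
have Uu := spectral_unitarymx (map_mx toC P).
have /mxOverP dr := hermitian_spectral_diag_real hP.
exists (spectralmx (map_mx toC P)), (map_mx (@complex.Re R) (spectral_diag (map_mx toC P))).
have -> : map_mx toC (map_mx (@complex.Re R) (spectral_diag (map_mx toC P))) = spectral_diag (map_mx toC P).
  by apply/matrixP => i j; rewrite !mxE RRe_real.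
split.
- exact/unitarymxP.
- by rewrite -invmx_unitary // mulVmx // unitarymx_unit.
- by rewrite -invmx_unitary //; apply/orthomx_spectralP.
Qed.
Lemma eig_spec n (P : 'M[R]_n) (U : 'M[C]_n) (d : 'rV[R]_n) :
  U *m U^t* = 1%:M -> map_mx toC P = U^t* *m diag_mx (map_mx toC d) *m U ->
  forall j, eigenvalue P (d 0 j).
Proof.
move=> UU PE j.
rewrite eigenvalue_root_char -(fmorph_root toC) map_char_poly -eigenvalue_root_char.
apply/eigenvalueP; exists (row j U).
  rewrite -row_mul PE !mulmxA UU mul1mx mul_diag_mx.
  by apply/rowP => k; rewrite !mxE.
apply/eqP => /(congr1 (mulmx^~ (U^t*))); rewrite -row_mul UU mul0mx.
move/rowP/(_ j); rewrite !mxE eqxx /=.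
by move/eqP; rewrite oner_eq0.
Qed.
Lemma ct_vec n (U M : 'M[C]_n) (v : 'cV[R]_n) :
  (map_mx toC v)^T *m U^t* *m M *m U *m map_mx toC v =
  (map_mx Num.Def.conjC (U *m map_mx toC v))^T *m M *m (U *m map_mx toC v).
Proof.
have E : (map_mx toC v)^T *m U^t* = (map_mx Num.Def.conjC (U *m map_mx toC v))^T.
  rewrite map_mxM trmx_mul map_trmx; congr (_ *m _).
  - by apply/matrixP => i j; rewrite !mxE /=; exact/esym/cj.
  - by apply/matrixP => i j; rewrite !mxE.
by rewrite E !mulmxA.
Qed.
Lemma quad_diag n (w : 'cV[C]_n) (e : 'rV[C]_n) :
  ((map_mx Num.Def.conjC w)^T *m diag_mx e *m w) 0 0 = \sum_i e 0 i * (w i 0 * (w i 0)^*).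
Proof.
rewrite mul_mx_diag !mxE; apply: eq_bigr => i _; rewrite !mxE.
by rewrite [_ * e 0 i]mulrC -mulrA [w i 0 * _]mulrC.
Qed.
Lemma cTc_c n (w : 'cV[R]_n) : (w^T *m w) 0 0 = \sum_i w i 0 ^+ 2.
Proof. by rewrite mxE; apply: eq_bigr => i _; rewrite mxE expr2. Qed.

Lemma sumsq_ge0_c n (w : 'cV[R]_n) : 0 <= \sum_i w i 0 ^+ 2.
Proof. by apply: sumr_ge0 => i _; exact: sqr_ge0. Qed.

Lemma enorm_sq_c n (w : 'cV[R]_n) : enorm w ^+ 2 = \sum_i w i 0 ^+ 2.
Proof. by rewrite /enorm sqr_sqrtr // sumsq_ge0_c. Qed.

Lemma sumsq_eq0_c n (w : 'cV[R]_n) : \sum_i w i 0 ^+ 2 = 0 -> w = 0.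
Proof.
move/eqP; rewrite psumr_eq0 => [/allP H|i _]; last exact: sqr_ge0.
apply/matrixP => i j; rewrite ord1 mxE; apply/eqP; rewrite -sqrf_eq0.
have := H i; rewrite mem_index_enum => /(_ isT) /implyP; exact.

Qed.

Lemma posdef_ge0_c n (P : 'M[R]_n) v : posdef P -> 0 <= qform P v.
Proof.
move=> [_ pP]; have [->|nz] := eqVneq v 0; last exact/ltW/pP.
by rewrite /qform mulmx0 mxE.
Qed.

Lemma eig_pos n (P : 'M[R]_n) a : posdef P -> eigenvalue P a -> 0 < a.
Proof.
move=> [sP pP] /eigenvalueP [v vP vnz].
have vnz' : v^T != 0 by rewrite trmx_eq0.
have := pP _ vnz'; rewrite /qform trmxK vP -scalemxAl mxE.
have : 0 < (v^T^T *m v^T) 0 0.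
  rewrite cTc_c lt_def sumsq_ge0_c andbT; apply/eqP => /sumsq_eq0_c /eqP.
  by rewrite (negbTE vnz').
by rewrite trmxK => h; rewrite pmulr_lgt0.
Qed.
Lemma toC_qform n (P : 'M[R]_n) (U : 'M[C]_n) (d : 'rV[R]_n) v :
  map_mx toC P = U^t* *m diag_mx (map_mx toC d) *m U ->
  toC (qform P v) = \sum_i toC (d 0 i) * ((U *m map_mx toC v) i 0 * ((U *m map_mx toC v) i 0)^*).
Proof.
move=> PE.
have -> : toC (qform P v) = (map_mx toC (v^T *m P *m v)) 0 0 by rewrite mxE.
rewrite !map_mxM PE -map_trmx !mulmxA ct_vec quad_diag.
by apply: eq_bigr => i _; rewrite mxE.
Qed.

Lemma lam_min n (P : 'M[R]_n) v : posdef P -> lambda_min P * enorm v ^+ 2 <= qform P v.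
Proof.
move=> pdP; have [sP _] := pdP.
have [U [d [UU UU' PE]]] := real_spec sP.
have lb : forall i, lambda_min P <= d 0 i.
  move=> i; apply: ge_inf; last exact: eig_spec UU PE i.
  by exists 0 => a /(eig_pos pdP) /ltW.
have I1 : map_mx toC 1%:M = U^t* *m diag_mx (map_mx toC (const_mx 1)) *m U.
  rewrite map_const_mx rmorph1 diag_const_mx mulmx1 UU'.
  by apply/matrixP => i j; rewrite !mxE; case: (i == j).

rewrite -lecR rmorphM /= (toC_qform _ PE) enorm_sq_c.
have -> : \sum_i v i 0 ^+ 2 = qform 1%:M v by rewrite /qform mulmx1 cTc_c.
rewrite (toC_qform _ I1) mulr_sumr; apply: ler_sum => i _.
rewrite mxE mul1r; apply: ler_wpM2r; first exact: mul_conjC_ge0.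
by rewrite lecR.
Qed.
Definition lag (s : seq R) (g : R -> R) : {poly R} :=
  \sum_(a <- s) g a *: \prod_(b <- s | b != a) ((a - b)^-1 *: ('X - b%:P)).

Lemma lagE s g c : uniq s -> c \in s -> (lag s g).[c] = g c.
Proof.
move=> us cs; rewrite /lag horner_sum (bigD1_seq c) //=.
rewrite hornerZ horner_prod big1 ?mulr1; last first.
  move=> b bc; rewrite hornerZ hornerXsubC mulVf //.
  by rewrite subr_eq0 eq_sym.
rewrite big1_seq ?addr0 // => a /andP [ac ain].
rewrite hornerZ horner_prod big_mkcond (bigD1_seq c) //= eq_sym ac.
by rewrite hornerZ hornerXsubC subrr mulr0 mul0r mulr0.
Qed.
Lemma trmx_horner k (A : 'M[R]_k.+1) p : (horner_mx A p)^T = horner_mx A^T p.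
Proof.
elim/poly_ind: p => [|p c IH]; first by rewrite !rmorph0 trmx0.
rewrite !(rmorphD, rmorphM) /= !(horner_mx_X, horner_mx_C) -!mulmxE linearD /=.
rewrite trmx_mul IH tr_scalar_mx; congr (_ + _).
by have := @comm_mx_horner _ _ A^T A^T p; rewrite /comm_mx => ->.
Qed.
Lemma sqrt_ex n (P : 'M[R]_n) : posdef P -> exists S : 'M[R]_n, posdef S /\ S *m S = P.
Proof.
case: n P => [|k] P pdP.
  exists 0; split; last by rewrite !flatmx0.
  split; first by rewrite trmx0.
  by move=> v; rewrite flatmx0 eqxx.
have [sP _] := pdP.
have [U [d [UU UU' PE]]] := real_spec sP.
have dpos : forall i, 0 < d 0 i := fun i => eig_pos pdP (eig_spec UU PE i).
pose s := undup [seq d 0 i | i <- enum 'I_k.+1].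
pose p := lag s Num.sqrt.
have pd : forall i, p.[d 0 i] = Num.sqrt (d 0 i).
  move=> i; apply: lagE; first exact: undup_uniq.
  by rewrite mem_undup; apply: map_f; rewrite mem_enum.
pose sq := map_mx Num.sqrt d.
have Uu : U \in unitmx by case: (mulmx1_unit UU').
have Ui : invmx U = U^t*.
  by rewrite -[U^t*]mulmx1 -(mulmxV Uu) mulmxA UU' mul1mx.
have SE : map_mx toC (horner_mx P p) = U^t* *m diag_mx (map_mx toC sq) *m U.
  rewrite map_horner_mx PE -Ui horner_mx_uconjC // horner_mx_diag.
  congr (_ *m diag_mx _ *m _).
  by apply/matrixP => i j; rewrite ord1 !mxE horner_map pd.
exists (horner_mx P p); split; last first.
  apply: (@map_mx_inj _ _ toC); rewrite map_mxM SE PE.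
  set Ds := diag_mx _.
  rewrite !mulmxA -[U^t* *m Ds *m U *m U^t*]mulmxA UU mulmx1 -[U^t* *m Ds *m Ds]mulmxA.
  congr (_ *m _ *m _); rewrite /Ds mul_diag_mx; apply/matrixP => i j; rewrite !mxE.
  case: (i == j); rewrite ?mulr1n ?mulr0n ?mulr0 // -rmorphM -expr2 sqr_sqrtr //.
  exact: ltW.
split; first by rewrite trmx_horner sP.
move=> v vnz; rewrite -ltcR rmorph0 (toC_qform _ SE).
set w := U *m map_mx toC v.
have [i wi] : exists i, w i 0 != 0.
  apply/existsP; apply: contraR vnz => /existsPn H.
  have w0 : w = 0.
    by apply/matrixP => a b; rewrite [b]ord1; have := H a; rewrite negbK => /eqP ->; rewrite mxE.
  have : map_mx toC v = 0 by rewrite -[map_mx toC v]mul1mx -UU' -mulmxA -/w w0 mulmx0.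
  move=> h; apply/eqP/(@map_mx_inj _ _ toC); rewrite h.
  by apply/matrixP => a b; rewrite !mxE.
rewrite (bigD1 i) //=; apply: ltr_wpDr.
  apply: sumr_ge0 => j _; apply: mulr_ge0; last exact: mul_conjC_ge0.
  by rewrite mxE ler0c sqrtr_ge0.
apply: mulr_gt0; last by rewrite mul_conjC_gt0.
by rewrite mxE ltcR sqrtr_gt0.
Qed.
End S.


Section M.
Variable R : realType.
Lemma sqrtm_prop n (P : 'M[R]_n) : posdef P -> posdef (sqrtm P) /\ sqrtm P *m sqrtm P = P.
Proof. by move=> pdP; apply: (xgetPex 0 (sqrt_ex pdP)). Qed.

Lemma qform_sqrt n (P : 'M[R]_n) y : posdef P -> qform P y = enorm (sqrtm P *m y) ^+ 2.
Proof.
move=> /sqrtm_prop [[sS _] SS]; rewrite enorm_sq -cTc trmx_mul sS.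
have -> : qform P y = (y^T *m (sqrtm P *m sqrtm P) *m y) 0 0 by rewrite SS.
by rewrite !mulmxA.
Qed.

Lemma unit_crit n (A : 'M[R]_n) : (forall u : 'rV[R]_n, u *m A = 0 -> u = 0) -> A \in unitmx.
Proof.
by move=> H; rewrite -row_free_unit -kermx_eq0; apply/rowV0P => v /sub_kermxP; exact: H.
Qed.

Lemma posdef_unit n (P : 'M[R]_n) : posdef P -> P \in unitmx.
Proof.
move=> [sP pP]; apply: unit_crit => u uP.
apply/eqP/negPn/negP => unz.
have : u^T != 0 by rewrite trmx_eq0.
move/pP; rewrite /qform trmxK uP mul0mx mxE.
by rewrite ltxx.
Qed.

Lemma rpinvK m k (M : 'M[R]_(m, k)) : row_free M -> M *m rpinv M = 1%:M.
Proof.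
move=> rf; rewrite /rpinv mulmxA mulmxV //; apply: unit_crit => u uM.
have : (u *m M) = 0.
  apply/trmx_inj; rewrite trmx0; apply: sumsq_eq0; rewrite -cTc trmxK.
  by rewrite trmx_mul mulmxA -(mulmxA u) uM mul0mx mxE.
by move=> h; apply: (row_free_inj rf); rewrite h mul0mx.
Qed.
Lemma bfMD n (M1 M2 : 'M[R]_n) x y : bf (M1 + M2) x y = bf M1 x y + bf M2 x y.
Proof. by rewrite /bf mulmxDr mulmxDl mxE. Qed.
Lemma bfMN n (M1 : 'M[R]_n) x y : bf (- M1) x y = - bf M1 x y.
Proof. by rewrite /bf mulmxN mulNmx mxE. Qed.
Lemma bfMZ n (c : R) (M1 : 'M[R]_n) x y : bf (c *: M1) x y = c * bf M1 x y.
Proof. by rewrite /bf -scalemxAr -scalemxAl mxE. Qed.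
Lemma bf_tr n (M1 : 'M[R]_n) x y : bf M1^T x y = bf M1 y x.
Proof.
rewrite /bf.
have -> : (x^T *m M1^T *m y) 0 0 = ((x^T *m M1^T *m y)^T) 0 0 by rewrite [RHS]mxE.
by rewrite !trmx_mul !trmxK mulmxA.
Qed.
End M.
Lemma addE (R : realType) (k : nat) (c : R) (p q : 'cV[R]_k) :
  c *: p + q = (c *: p : 'cV[R]_k) + q :> 'cV[R]_k.
Proof. by []. Qed.

Lemma aff_hyp (R : realType) n k (x : 'cV[R]_n) (Th : 'M[R]_(n,k)) (xh w : 'cV[R]_k) (h : R) :
  x - Th *m (h *: w + xh) = x - Th *m xh + h *: - (Th *m w).
Proof.
apply/matrixP => i j; rewrite !mxE; under eq_bigr => k0 _ do rewrite !mxE.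
have E : \sum_k0 Th i k0 * (h * w k0 j + xh k0 j) = h * \sum_k0 Th i k0 * w k0 j + \sum_k0 Th i k0 * xh k0 j.
  by rewrite mulr_sumr -big_split; apply: eq_bigr => k0 _ /=; ring.
rewrite E; ring.
Qed.

Lemma key_lem (R : realType) n m nh mh (A : 'M[R]_n) (B : 'M[R]_(n, m)) (Th : 'M[R]_(n, nh))
  (Ah : 'M[R]_nh) (Bh : 'M[R]_(nh, mh)) (Xi : 'M[R]_(m, nh)) (Psi : 'M[R]_(m, mh)) (K : 'M[R]_(m, n))
  (x : 'cV[R]_n) (xh : 'cV[R]_nh) (uh : 'cV[R]_mh) :
  Th *m Ah = A *m Th + B *m Xi ->
  A *m x + B *m (K *m (x - Th *m xh) + Xi *m xh + Psi *m uh) + - (Th *m (Ah *m xh + Bh *m uh))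
  = (A + B *m K) *m (x - Th *m xh) + (B *m Psi - Th *m Bh) *m uh.
Proof.
move=> ThA.
rewrite !mulmxDr !mulmxDl !mulmxN !mulNmx !mulmxA ThA mulmxDl.
apply/matrixP => i j; rewrite !mxE; ring.
Qed.

Lemma zid (V : zmodType) (a1 a2 a3 a4 a5 a6 : V) :
  a1 + a2 + (a3 + a4 + a5) - (a2 + a4 + a6) = a1 + a3 + (a5 - a6).
Proof.
have -> : a1 + a2 + (a3 + a4 + a5) = (a1 + a3 + a5) + (a2 + a4).
  by rewrite -!addrA; congr (a1 + _); rewrite addrCA; congr (_ + _); rewrite addrA addrC.
by rewrite opprD addrA addrK -addrA.
Qed.

Unset Implicit Arguments.
Theorem theorem2 (R : realType) (n m T nh mh : nat)
  (A : 'M[R]_n) (B : 'M[R]_(n, m))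
  (U0 : 'M[R]_(m, T)) (X0 X1 Xb0 Xb1 : 'M[R]_(n, T)) (Qb : 'M[R]_(T, n))
  (kh : R) (H : 'M[R]_(T, n)) (Ah : 'M[R]_nh) (Xi : 'M[R]_(m, nh))
  (Theta : 'M[R]_(n, nh)) (P : 'M[R]_n)
  (Bh : 'M[R]_(nh, mh)) (Psi : 'M[R]_(m, mh))
  (X : set 'cV[R]_n) (Xh : set 'cV[R]_nh) (Uh : set 'cV[R]_mh) (eps : R) :
  (0 < T)%N ->
  X1 = A *m X0 + B *m U0 ->
  Xb1 = A *m Xb0 ->
  row_free X0 -> row_free Xb0 ->
  Xb0 *m Qb = 1%:M ->
  0 < kh ->
  (* (i) *)
  posdef P -> X0 *m H = invmx P ->
  (* (ii) *)
  row_free (U0 *m (H *m P)) ->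
  Xb1 *m Qb *m Theta
    = Theta *m Ah
      - ((X1 *m (H *m P) - Xb1 *m Qb) *m rpinv (U0 *m (H *m P))) *m Xi ->
  (* (iii) *)
  loewner_le (H^T *m X1^T + X1 *m H) (- kh *: (X0 *m H)) ->
  0 < eps -> eps < kh ->
  let Q := H *m P in
  let Bd := (X1 *m Q - Xb1 *m Qb) *m rpinv (U0 *m Q) in
  let Ch := Theta in
  let V := fun (x : 'cV[R]_n) (xh : 'cV[R]_nh) => qform P (x - Theta *m xh) in
  let alpha := lambda_min P in
  let kappa := kh - eps in
  let rho := eps^-1 * opnorm (sqrtm P *m (Bd *m Psi - Theta *m Bh)) ^+ 2 in
  0 < kappa /\
  (forall x xh, X x -> Xh xh -> alpha * enorm (x - Ch *m xh) ^+ 2 <= V x xh) /\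
  (forall x xh uh, X x -> Xh xh -> Uh uh ->
     let u := U0 *m Q *m (x - Theta *m xh) + Xi *m xh + Psi *m uh in
     'D_(A *m x + B *m u) (fun z => V z xh) x
       + 'D_(Ah *m xh + Bh *m uh) (fun zh => V x zh) xh
     <= - kappa * V x xh + rho * enorm uh ^+ 2).
Proof.
move=> T0 X1E Xb1E rfX0 rfXb0 XbQ kh0 pdP X0H rfU0Q condii loew eps0 epsk Q Bd Ch V alpha kappa rho.
have [sP _] := pdP.
have Pu := posdef_unit pdP.
have X0Q : X0 *m Q = 1%:M by rewrite /Q mulmxA X0H mulVmx.
have AQ : Xb1 *m Qb = A by rewrite Xb1E -mulmxA XbQ mulmx1.
have X1Q : X1 *m Q = A + B *m (U0 *m Q).
  by rewrite X1E mulmxDl -!mulmxA X0Q mulmx1.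
have BdB : Bd = B.
  by rewrite /Bd AQ X1Q addrC addKr -mulmxA rpinvK ?mulmx1.
have BdB' : (X1 *m (H *m P) - Xb1 *m Qb) *m rpinv (U0 *m (H *m P)) = B := BdB.
rewrite BdB' AQ in condii.
have ThA : Theta *m Ah = A *m Theta + B *m Xi by rewrite condii subrK.
split; first by rewrite /kappa subr_gt0.
split.
  by move=> x xh _ _; rewrite /V /alpha /Ch; exact: lam_min.
move=> x xh uh _ _ _; cbv zeta.
set u := (U0 *m Q *m _ + _ + _).
rewrite /V /=.
rewrite (@deriv_q _ _ _ P (fun z => z - Theta *m xh) x (A *m x + B *m u) (A *m x + B *m u)); last first.
  by move=> h; rewrite [h *: _ + x]addrC addrAC.
rewrite (@deriv_q _ _ _ P (fun zh => x - Theta *m zh) xh (Ah *m xh + Bh *m uh)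
   (- (Theta *m (Ah *m xh + Bh *m uh)))); last first.
  by move=> h; apply: aff_hyp.
set e := x - Theta *m xh.
set w1 := A *m x + B *m u.
set w2 := - (Theta *m (Ah *m xh + Bh *m uh)).
set M := Bd *m Psi - Theta *m Bh.
have key : w1 + w2 = X1 *m Q *m e + M *m uh.
  by rewrite /w1 /w2 /M /u X1Q BdB; apply: key_lem.
have F1 : bf P w1 e = bf P e w1 by rewrite bf_sym.
have F2 : bf P w2 e = bf P e w2 by rewrite bf_sym.
have F3 : bf P e w1 + bf P e w2 = bf P e (X1 *m Q *m e) + bf P e (M *m uh).
  by rewrite -!bfD key.
set z := P *m e.
have L : 0 <= bf (- kh *: (X0 *m H)) z z - bf (H^T *m X1^T + X1 *m H) z z.
  by rewrite -bfMN -bfMD; exact: loew.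
rewrite bfMZ bfMD -trmx_mul bf_tr in L.
have E1 : bf P e (X1 *m Q *m e) = bf (X1 *m H) z z.
  by rewrite /bf /z /Q trmx_mul sP !mulmxA.
have E3 : bf (X0 *m H) z z = qform P e.
  by rewrite /bf X0H /z !mulmxA mulmxKV // trmx_mul sP.
have B2 := young e (M *m uh) pdP eps0.
have B3 : qform P (M *m uh) <= (opnorm (sqrtm P *m M) * enorm uh) ^+ 2.
  rewrite qform_sqrt // mulmxA !expr2; apply: ler_pM; try exact: enorm_ge0.
    exact: opnorm_bound.
  exact: opnorm_bound.
have B4 : eps^-1 * qform P (M *m uh) <= eps^-1 * ((opnorm (sqrtm P *m M) * enorm uh) ^+ 2).
  by apply: ler_wpM2l => //; rewrite invr_ge0 ltW.
rewrite exprMn in B4.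
rewrite /kappa /rho F1 F2.
rewrite E3 in L; rewrite -/M.
lra.
Qed.
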